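(* For every $k\ge0$ there are constants $c,c'>0$ such that the following holds. For every $n\ge2k$ and every weighted $k$-uniform hypergraph $w$ on $[n]$, $$cn^{-k}\|w\|_1 \le \sum_{i=0}^k W_i\le c'n^{-k}\|w\|_1,$$ where $(W_0,\ldots,W_k)$ is the $W$-vector of $w$.
   Context: $[n]=\{1,\dots,n\}$; $V^{(k)}$ is the family of $k$-subsets of $V$; a weighted $k$-uniform hypergraph on $V$ is a function $w:V^{(k)}\to\mathbb{R}$; $w(S)=\sum_{e\in S^{(k)}}w(e)$; $\|w\|_1=\sum_e|w(e)|$. $W$-vector (defined recursively on $k$): for $w$ on an $n$-set $V$, $W_0=|w(V)|/\binom nk$ (for $k=0$, $w$ is a single real number and $W_0=|w|$). For $k\ge1$ and distinct $x,y\in V$, $w^{xy}:(V\setminus\{x,y\})^{(k-1)}\to\mathbb{R}$ is $w^{xy}(e)=w(e\cup\{x\})-w(e\cup\{y\})$; with $(W^{xy}_0,\ldots,W^{xy}_{k-1})$ its $W$-vector, $W_i=\frac{1}{n(n-1)}\sum_{(x,y):\,x\ne y}W^{xy}_{i-1}$ for $1\le i\le k$ (average over ordered pairs of distinct vertices). *)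

(* Defs.v *)
From mathcomp Require Import all_boot all_order all_algebra.
Set Implicit Arguments. Unset Strict Implicit. Unset Printing Implicit Defensive.
Import Order.TTheory GRing.Theory Num.Theory.
Local Open Scope ring_scope.

(* A weighted k-uniform hypergraph on a vertex set V : {set T} is represented
   by a function w : {set T} -> R; only its values on the k-subsets of V are
   ever used. *)

Definition wsum (R : numDomainType) (T : finType) (k : nat)
  (w : {set T} -> R) (S : {set T}) : R :=
  \sum_(e : {set T} | (e \subset S) && (#|e| == k)) w e.

Definition wnorm1 (R : numDomainType) (T : finType) (k : nat)
  (w : {set T} -> R) (V : {set T}) : R :=
  \sum_(e : {set T} | (e \subset V) && (#|e| == k)) `|w e|.

Definition wxy (R : numDomainType) (T : finType) (w : {set T} -> R) (x y : T)
  : {set T} -> R := fun e => w (x |: e) - w (y |: e).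

(* Wvec k V w i = W_i of the k-uniform weighted hypergraph w on V
   (meaningful for i <= k; equal to 0 for i > k). *)
Fixpoint Wvec (R : numFieldType) (T : finType) (k : nat)
  (V : {set T}) (w : {set T} -> R) (i : nat) {struct k} : R :=
  match i with
  | 0%N => `|wsum k w V| / ('C(#|V|, k))%:R
  | i'.+1 =>
      match k with
      | 0%N => 0
      | k'.+1 =>
          ((#|V| * (#|V|).-1)%:R)^-1 *
          \sum_(x in V) \sum_(y in V | y != x)
              Wvec k' (V :\ x :\ y) (wxy w x y) i'
      end
  end.

(* Main.v *)
Require Import Defs.
From mathcomp Require Import all_boot all_order all_algebra.
From mathcomp Require Import zify ring lra.
Import Order.TTheory GRing.Theory Num.Theory.
Local Open Scope ring_scope.


Lemma leq_expn2 a b m : (a <= b)%N -> (a ^ m <= b ^ m)%N.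
Proof. by move=> ab; elim: m => // m IH; rewrite !expnS leq_mul. Qed.



Lemma exp_ffact n k : (2 * k <= n)%N -> (n ^ k <= 2 ^ k * n ^_ k)%N.
Proof.
elim: k => [|k IH] hk; first by rewrite ffactn0.
have /IH IH' : (2 * k <= n)%N by lia.
rewrite ffactnSr expnSr expnS.
apply: leq_trans (leq_mul IH' (_ : n <= 2 * (n - k))%N) _; first by lia.
by rewrite mulnCA !mulnA.
Qed.

Lemma exp_bin n k : (2 * k <= n)%N -> (n ^ k <= 2 ^ k * k`! * 'C(n, k))%N.
Proof. by move=> hk; rewrite -mulnA [(k`! * _)%N]mulnC bin_ffact exp_ffact. Qed.

Lemma ffact_exp n k : (n ^_ k <= n ^ k)%N.
Proof.
elim: k => [|k IH]; first by rewrite ffactn0.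
by rewrite ffactnSr expnSr leq_mul // leq_subr.
Qed.

Lemma bin_exp n k : ('C(n, k) <= n ^ k)%N.
Proof.
apply: leq_trans (ffact_exp n k); rewrite -bin_ffact leq_pmulr //; exact: fact_gt0.
Qed.

Lemma exp_n12 n m : (2 * m.+1 <= n)%N -> (n ^ m.+1 <= 2 ^ m.+1 * (n.-1 * n.-2 ^ m))%N.
Proof.
move=> hn.
have h1 : (n ^ m <= 2 ^ m * n.-2 ^ m)%N.
  case: m hn => [|m] hn; first by [].
  rewrite -expnMn leq_expn2 //; lia.
rewrite expnSr expnS mulnCA [X in (_ <= X)%N]mulnCA mulnA [(2 * _)%N]mulnC.
apply: leq_trans (leq_mul h1 (_ : n <= 2 * n.-1)%N) _; first by lia.
nia.
Qed.


Lemma arith_low (R : realFieldType) (c D N B E X Y nn : R) :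
  0 < c -> 0 < D -> 1 <= nn -> 0 <= N -> 0 <= X -> 0 <= Y -> 0 <= B -> 0 <= E ->
  (nn + 1) * N <= D * ((nn + 1) * B + E) -> B <= X -> c * E <= nn * Y ->
  c / (D * (2 * c + 1)) * N <= X + Y.
Proof.
move=> hc hD hn hN hX hY hB hE hP hBX hEY.
have h1 : c * ((nn + 1) * B + E) <= nn * ((2 * c + 1) * (X + Y)).
  have : c * ((nn + 1) * B) <= c * ((nn + 1) * X) by apply: ler_wpM2l; [lra|apply: ler_wpM2l; lra].
  have : 0 <= c * X * (nn - 1) by rewrite !mulr_ge0 //; lra.
  have : 0 <= nn * X by rewrite mulr_ge0 //; lra.
  have : 0 <= c * nn * Y by rewrite !mulr_ge0 //; lra.
  nra.
have h2 : c * (nn * N) <= nn * (D * ((2 * c + 1) * (X + Y))).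
  have : c * (nn * N) <= c * ((nn + 1) * N) by apply: ler_wpM2l; [lra|apply: ler_wpM2r; lra].
  have : c * ((nn + 1) * N) <= c * (D * ((nn + 1) * B + E)) by apply: ler_wpM2l; lra.
  have : D * (c * ((nn + 1) * B + E)) <= D * (nn * ((2 * c + 1) * (X + Y))) by apply: ler_wpM2l; lra.
  nra.
have h3 : c * N <= D * ((2 * c + 1) * (X + Y)).
  rewrite -(ler_pM2l (_ : 0 < nn)); last lra.
  by rewrite mulrCA.
have hpos : 0 < D * (2 * c + 1) by rewrite mulr_gt0 //; lra.
rewrite mulrAC ler_pdivrMr //; apply: (le_trans h3).
by rewrite le_eqVlt; apply/orP; left; apply/eqP; ring.
Qed.

Lemma arith_up (R : realFieldType) (p T z n n1 K2 C2 N : R) :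
  0 < n -> 0 < n1 -> 0 <= T -> 0 <= K2 ->
  p <= K2 * (n1 * z) -> z * T <= C2 * (n * N) ->
  p * ((n * n1)^-1 * T) <= K2 * (C2 * N).
Proof.
move=> hn hn1 hT hK hp hz.
have hq : 0 <= (n * n1)^-1 * T by rewrite mulr_ge0 // invr_ge0 mulr_ge0 // ltW.
apply: le_trans (ler_wpM2r hq hp) _.
have -> : K2 * (n1 * z) * ((n * n1)^-1 * T) = K2 * ((z * T) / n).
  by field; apply/andP; split; rewrite gt_eqF.
apply: ler_wpM2l => //; rewrite ler_pdivrMr //.
by apply: (le_trans hz); rewrite le_eqVlt; apply/orP; left; apply/eqP; ring.
Qed.

Fixpoint lowc (R : realFieldType) (k : nat) : R :=
  if k is m.+1 then lowc R m / (2 ^+ m.+1 * (2 * lowc R m + 1)) else 1.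
Fixpoint upc (R : realFieldType) (k : nat) : R :=
  if k is m.+1 then 2 ^+ m.+1 * (m.+1)`!%:R + 2 ^+ m.+1 * (upc R m * (2 * (m.+1)%:R))
  else 1.

Section Aux.

Variable R : realFieldType.
Variable T : finType.

Lemma sum_sub_le (I : finType) (P Q : pred I) (F : I -> R) :
  (forall i, P i -> Q i) -> (forall i, Q i -> 0 <= F i) ->
  \sum_(i | P i) F i <= \sum_(i | Q i) F i.
Proof.
move=> PQ F0; rewrite [X in _ <= X](bigID P) /=.
rewrite (eq_bigl P) => [|i]; last by apply/andP/idP => [[]//|Pi]; split=> //; exact: PQ.
by rewrite lerDl sumr_ge0 // => i /andP[/F0].
Qed.

Lemma sum_contain (U : {set T}) (x : T) (j : nat) (F : {set T} -> R) : x \in U ->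
  \sum_(f : {set T} | ((f \subset U) && (#|f| == j)) && (x \in f)) F f =
  \sum_(e : {set T} | (e \subset U :\ x) && (#|e|.+1 == j)) F (x |: e).
Proof.
move=> xU.
rewrite (reindex_onto (fun e => x |: e) (fun f => f :\ x)) /=; last first.
  by move=> f /andP[_ xf]; rewrite setD1K.
apply: eq_bigl => e.
rewrite setU11 andbT subsetD1 cardsU1 subUset sub1set xU /=.
case xe: (x \in e) => /=.
  by rewrite andbF; case: ((x |: e) :\ x =P e) => He; rewrite ?andbF //; have := setD11 x (x |: e); rewrite He xe.
by rewrite setU1K ?(negbT xe) // eqxx !andbT add1n.
Qed.

Lemma link_sum (U : {set T}) (j : nat) (F : {set T} -> R) :
  (\sum_(f : {set T} | (f \subset U) && (#|f| == j.+1)) F f) *+ j.+1 =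
  \sum_(x in U) \sum_(e : {set T} | (e \subset U :\ x) && (#|e| == j)) F (x |: e).
Proof.
rewrite -sumrMnl.
transitivity (\sum_(f : {set T} | (f \subset U) && (#|f| == j.+1)) \sum_(x in f) F f).
  apply: eq_bigr => f /andP[_ /eqP cf]; by rewrite sumr_const cf.
rewrite (exchange_big_dep (mem U)) /=; last by move=> f y /andP[/subsetP fU _]; exact: fU.
apply: eq_bigr => x xU; exact: sum_contain.
Qed.


Definition Ed (k : nat) (V : {set T}) (w : {set T} -> R) : R :=
  \sum_(x in V) \sum_(y in V | y != x) wnorm1 k.-1 (wxy w x y) (V :\ x :\ y).
Definition lk (w : {set T} -> R) (x : T) : {set T} -> R := fun e => w (x |: e).

Lemma wnorm1_ge0 k (w : {set T} -> R) (V : {set T}) : 0 <= wnorm1 k w V.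
Proof. by apply: sumr_ge0 => e _. Qed.

Lemma Ed_ge0 k (V : {set T}) (w : {set T} -> R) : 0 <= Ed k V w.
Proof. by apply: sumr_ge0 => x _; apply: sumr_ge0 => y _; exact: wnorm1_ge0. Qed.

Lemma Wvec_ge0 k (V : {set T}) (w : {set T} -> R) i : 0 <= Wvec k V w i.
Proof.
elim: k V w i => [|k IH] V w [|i] /=; rewrite ?divr_ge0 //.
by rewrite mulr_ge0 ?invr_ge0 // sumr_ge0 // => x _; rewrite sumr_ge0.
Qed.

Lemma sum_size0 (V : {set T}) (F : {set T} -> R) :
  \sum_(e : {set T} | (e \subset V) && (#|e| == 0%N)) F e = F set0.
Proof.
rewrite (eq_bigl (fun e => e == set0)) ?big_pred1_eq // => e.
by rewrite cards_eq0; case: (e =P set0) => [->|_]; rewrite ?sub0set ?andbF.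
Qed.

Lemma norm_link j (V : {set T}) (w : {set T} -> R) :
  wnorm1 j.+1 w V *+ j.+1 = \sum_(x in V) wnorm1 j (lk w x) (V :\ x).
Proof. exact: link_sum. Qed.

Lemma wsum_link j (V : {set T}) (w : {set T} -> R) :
  wsum j.+1 w V *+ j.+1 = \sum_(x in V) wsum j (lk w x) (V :\ x).
Proof. exact: link_sum. Qed.

Lemma setDC (V : {set T}) x y : V :\ x :\ y = V :\ y :\ x.
Proof. by apply/setP => z; rewrite !inE andbCA. Qed.

Lemma split_d m (V : {set T}) (w : {set T} -> R) (x y : T) : y \in V :\ x ->
  wsum m (lk w x) (V :\ x) =
  wsum m (lk w x) (V :\ x :\ y) +
  \sum_(e : {set T} | (e \subset V :\ x :\ y) && (#|e|.+1 == m)) w (x |: (y |: e)).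
Proof.
move=> yV; rewrite /wsum (bigID (fun e : {set T} => y \in e)) /= addrC; congr (_ + _).
  by apply: eq_bigl => e; rewrite [e \subset V :\ x :\ y]subsetD1 andbAC.
exact: (sum_contain (V :\ x) y m (lk w x) yV).
Qed.

Lemma diff_d m (V : {set T}) (w : {set T} -> R) (x y : T) : x \in V -> y \in V -> y != x ->
  wsum m (lk w x) (V :\ x) - wsum m (lk w y) (V :\ y) =
  wsum m (wxy w x y) (V :\ x :\ y).
Proof.
move=> xV yV yx.
rewrite (split_d m V w x y); last by rewrite !inE yx.
rewrite (split_d m V w y x); last by rewrite !inE eq_sym yx.
rewrite [V :\ y :\ x]setDC.
under [X in _ - (_ + X)]eq_bigr do rewrite setUCA.
rewrite opprD addrACA subrr addr0 /wsum -sumrB.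
by apply: eq_bigr.
Qed.


Lemma if_sumr (b : bool) (F : T -> R) :
  (if b then \sum_i F i else 0) = \sum_i (if b then F i else 0).
Proof. by case: b; rewrite // big1. Qed.

Lemma triple_ex (G : T -> T -> T -> R) (V : {set T}) :
 \sum_(x in V) \sum_(y in V :\ x) \sum_(z in V :\ x | z != y) G x y z =
 \sum_(y in V) \sum_(z in V | z != y) \sum_(x in V :\ y :\ z) G x y z.
Proof.
rewrite (exchange_big_dep (mem V)) /=; last by move=> x y _; rewrite !inE => /andP[].
apply: eq_bigr => y yV.
rewrite (exchange_big_dep (fun z => (z \in V) && (z != y))) /=; last first.
  by move=> x z _; rewrite !inE => /andP[/andP[_ ->] ->].
apply: eq_bigr => z /andP[zV zy]; apply: eq_bigl => x.
rewrite !inE yV zV zy /= !andbT.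
by rewrite (eq_sym y) (eq_sym z); case: (x \in V); case: (x != y); case: (x != z).
Qed.

Lemma wnorm1_ext k (g h : {set T} -> R) (V : {set T}) :
  (forall e, g e = h e) -> wnorm1 k g V = wnorm1 k h V.
Proof. by move=> gh; apply: eq_bigr => e _; rewrite gh. Qed.

Lemma Ed_link m (V : {set T}) (w : {set T} -> R) :
  \sum_(x in V) Ed m.+1 (V :\ x) (lk w x) = Ed m.+2 V w *+ m.+1.
Proof.
rewrite /Ed /= (triple_ex (fun x y z => wnorm1 m (wxy (lk w x) y z) (V :\ x :\ y :\ z))).
rewrite -sumrMnl; apply: eq_bigr => y yV.
rewrite -sumrMnl; apply: eq_bigr => z _.
rewrite norm_link; apply: eq_bigr => x _.
have -> : V :\ x :\ y :\ z = V :\ y :\ z :\ x.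
  by apply/setP => t; rewrite !inE; case: (t == x); case: (t == y); case: (t == z).
by apply: wnorm1_ext => e; rewrite /wxy /lk !(setUCA [set x]).
Qed.

Lemma complete_poinc (V : {set T}) (d : T -> R) :
  #|V|%:R * \sum_(x in V) `|d x| <=
  #|V|%:R * `|\sum_(x in V) d x| + \sum_(x in V) \sum_(y in V | y != x) `|d x - d y|.
Proof.
have H : forall x, x \in V -> #|V|%:R * `|d x| <=
   `|\sum_(x in V) d x| + \sum_(y in V | y != x) `|d x - d y|.
  move=> x xV.
  have e : #|V|%:R * d x = \sum_(y in V) d y + \sum_(y in V) (d x - d y).
    by rewrite sumrB sumr_const addrC subrK mulr_natl.
  rewrite -normr_nat -normrM e; apply: le_trans (ler_normD _ _) _.
  rewrite lerD2l (bigD1 x) //= subrr add0r; exact: ler_norm_sum.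
rewrite mulr_sumr; apply: le_trans (ler_sum _ H) _.
by rewrite big_split /= sumr_const mulr_natl.
Qed.

Definition Ehat k (V : {set T}) (w : {set T} -> R) : R :=
  if k is 0 then 0 else Ed k V w.

Lemma poincare k : forall (V : {set T}) (w : {set T} -> R),
  (#|V|.+1)%:R * wnorm1 k w V <=
  2 ^+ k * ((#|V|.+1)%:R * `|wsum k w V| + Ehat k V w).
Proof.
elim: k => [|m IH] V w.
  by rewrite /wnorm1 /wsum !sum_size0 expr0 mul1r /= addr0.
set n := #|V|.
set d := fun x => wsum m (lk w x) (V :\ x).
have h1 : ((n.+1)%:R * wnorm1 m.+1 w V) *+ m.+1 =
    \sum_(x in V) (n.+1)%:R * wnorm1 m (lk w x) (V :\ x).
  by rewrite -mulrnAr norm_link mulr_sumr.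
have h2 : forall x, x \in V -> (n.+1)%:R * wnorm1 m (lk w x) (V :\ x) <=
    2 ^+ m.+1 * (n%:R * `|d x| + Ehat m (V :\ x) (lk w x)).
  move=> x xV.
  have cn : n = (#|V :\ x|).+1 by rewrite /n (cardsD1 x V) xV.
  have := IH (V :\ x) (lk w x); rewrite -cn => IHx.
  apply: le_trans (_ : 2 * (n%:R * wnorm1 m (lk w x) (V :\ x)) <= _).
    rewrite mulrA ler_wpM2r ?wnorm1_ge0 // -natrM ler_nat; lia.
  by rewrite exprS -mulrA ler_wpM2l.
have h3 : \sum_(x in V) d x = wsum m.+1 w V *+ m.+1 by rewrite wsum_link.
have h5 : \sum_(x in V) \sum_(y in V | y != x) `|d x - d y| <= Ed m.+1 V w.
  apply: ler_sum => x xV; apply: ler_sum => y /andP[yV yx].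
  rewrite /d diff_d //; exact: ler_norm_sum.
have h6 : \sum_(x in V) Ehat m (V :\ x) (lk w x) <= Ed m.+1 V w *+ m.
  case: m {IH h1 h2 h3 h5 d} => [|m]; first by rewrite big1 // mulr0n.
  by rewrite /= Ed_link.
have hp := complete_poinc V d.
rewrite /= -(ler_pMn2r (ltn0Sn m)) h1.
apply: le_trans (ler_sum _ h2) _.
rewrite -mulr_sumr big_split /= -mulr_sumr -mulrnAr ler_wpM2l ?exprn_ge0 //.
apply: le_trans (lerD (le_trans hp (lerD (lexx _) h5)) h6) _.
rewrite h3 normrMn -addrA -mulrS mulrnDl lerD2r mulrnAr lerMn2r; apply/orP; right.
by rewrite ler_wpM2r // ler_nat /n.
Qed.


Lemma sumW_S m (V : {set T}) (w : {set T} -> R) :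
  \sum_(0 <= i < m.+2) Wvec m.+1 V w i =
  Wvec m.+1 V w 0 + ((#|V| * (#|V|).-1)%:R)^-1 *
   \sum_(x in V) \sum_(y in V | y != x)
      \sum_(0 <= i < m.+1) Wvec m (V :\ x :\ y) (wxy w x y) i.
Proof.
rewrite big_nat_recl //=; congr (_ + _).
rewrite -mulr_sumr; congr (_ * _).
rewrite exchange_big /=; apply: eq_bigr => x _.
by rewrite exchange_big.
Qed.

Lemma card2 (V : {set T}) x y : x \in V -> y \in V -> y != x ->
  #|V| = (#|V :\ x :\ y|).+2.
Proof.
by move=> xV yV yx; rewrite (cardsD1 x V) xV (cardsD1 y (V :\ x)) !inE yx yV.
Qed.

Lemma lower k : 0 < lowc R k /\ forall (V : {set T}) (w : {set T} -> R),
   (2 * k <= #|V|)%N ->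
   lowc R k * wnorm1 k w V <= #|V|%:R ^+ k * \sum_(0 <= i < k.+1) Wvec k V w i.
Proof.
elim: k => [|m [hc IH]].
  split=> // V w _.
  by rewrite big_nat1 /= expr0 !mul1r bin0 divr1 /wnorm1 /wsum !sum_size0.
set c := lowc R m.
set D : R := 2 ^+ m.+1.
have hD : 0 < D by rewrite exprn_gt0.
rewrite [lowc R m.+1]/= -/c -/D; split.
  rewrite divr_gt0 // mulr_gt0 //; rewrite /c; lra.
move=> V w hn.
set n := #|V|.
have n1 : 1 <= n%:R :> R by rewrite ler1n; lia.
rewrite sumW_S.
set q := ((n * n.-1)%:R)^-1.
set T0 := \sum_(x in V) _.
have hS : forall x y, 0 <= \sum_(0 <= i < m.+1) Wvec m (V :\ x :\ y) (wxy w x y) i.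
  by move=> x y; apply: sumr_ge0 => i _; exact: Wvec_ge0.
have hT0 : 0 <= T0 by apply: sumr_ge0 => x _; apply: sumr_ge0 => y _.
have hq : 0 <= q by rewrite invr_ge0.
have hP := poincare m.+1 V w; rewrite /= -natr1 in hP.
rewrite [X in _ <= X]mulrDr; apply: (arith_low _ _ _ _ _ _ _ _ _ hc hD n1 (wnorm1_ge0 _ _ _) _ _ _ _ hP).
- by rewrite mulr_ge0 ?exprn_ge0 // Wvec_ge0.
- by rewrite mulr_ge0 ?exprn_ge0 // mulr_ge0.
- by [].
- exact: Ed_ge0.
- rewrite /= -[X in X <= _](@mulfK _ ('C(n, m.+1))%:R); last first.
    by rewrite pnatr_eq0 -lt0n bin_gt0; lia.
  rewrite mulrAC [X in X <= _]mulrC; apply: ler_wpM2r; first by rewrite divr_ge0.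
  by rewrite -natrX ler_nat bin_exp.
apply: (@le_trans _ _ (n%:R ^+ m * T0)).
  rewrite /Ed /= /T0 mulr_sumr [X in _ <= X]mulr_sumr; apply: ler_sum => x xV.
  rewrite mulr_sumr [X in _ <= X]mulr_sumr; apply: ler_sum => y /andP[yV yx].
  have c2 := card2 _ _ _ xV yV yx.
  apply: le_trans (IH _ _ _) _; first by move: hn; rewrite /n c2 => hn'; lia.
  apply: ler_wpM2r => //; rewrite -!natrX ler_nat leq_expn2 //.
  by rewrite /n c2; lia.
have hb : 0 < (n.-1)%:R :> R by rewrite ltr0n; lia.
have ha : 0 < n%:R :> R by lra.
have -> : n%:R * (n%:R ^+ m.+1 * (q * T0)) = (n%:R ^+ m * T0) * (n%:R / (n.-1)%:R).
  rewrite /q natrM exprS; field; apply/andP; split; rewrite gt_eqF //.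
apply: ler_peMr; first by rewrite mulr_ge0 ?exprn_ge0.
by rewrite ler_pdivlMr // mul1r ler_nat; lia.
Qed.

Lemma wnorm1_wxy m (U : {set T}) (w : {set T} -> R) x y :
  wnorm1 m (wxy w x y) U <= wnorm1 m (lk w x) U + wnorm1 m (lk w y) U.
Proof. rewrite /wnorm1 -big_split /=; apply: ler_sum => e _; exact: ler_normB. Qed.

Lemma wnorm1_sub m (U U' : {set T}) (g : {set T} -> R) :
  U \subset U' -> wnorm1 m g U <= wnorm1 m g U'.
Proof.
move=> sU; apply: sum_sub_le => [e /andP[eU ->]|e _]; last by [].
by rewrite (subset_trans eU sU).
Qed.

Lemma sum_pairs (V : {set T}) (A : T -> R) :
  \sum_(x in V) \sum_(y in V) (A x + A y) = (\sum_(x in V) A x) *+ (2 * #|V|).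
Proof.
under eq_bigr do rewrite big_split /= sumr_const.
rewrite big_split /= sumr_const sumrMnl -mulrnDr.
by rewrite addnn -mul2n.
Qed.

Lemma upper k : 0 < upc R k /\ forall (V : {set T}) (w : {set T} -> R),
   (2 * k <= #|V|)%N ->
   #|V|%:R ^+ k * \sum_(0 <= i < k.+1) Wvec k V w i <= upc R k * wnorm1 k w V.
Proof.
elim: k => [|m [hC IH]].
  split=> // V w _.
  by rewrite big_nat1 /= expr0 !mul1r bin0 divr1 /wnorm1 /wsum !sum_size0.
set C := upc R m.
rewrite [upc R m.+1]/= -/C.
set K1 : R := 2 ^+ m.+1 * (m.+1)`!%:R.
set K2 : R := 2 ^+ m.+1.
set C2 : R := C * (2 * (m.+1)%:R).
have hK1 : 0 < K1 by rewrite mulr_gt0 ?exprn_gt0 // ltr0n fact_gt0.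
have hK2 : 0 < K2 by rewrite exprn_gt0.
have hC2 : 0 < C2 by rewrite mulr_gt0 // mulr_gt0 // ltr0n.
split; first by rewrite addr_gt0 // mulr_gt0.
move=> V w hn.
set n := #|V|.
rewrite sumW_S.
set q := ((n * n.-1)%:R)^-1.
set T0 := \sum_(x in V) _.
rewrite mulrDr mulrDl; apply: lerD.
  have hCb : ('C(n, m.+1))%:R != 0 :> R by rewrite pnatr_eq0 -lt0n bin_gt0; lia.
  have hp : n%:R ^+ m.+1 <= K1 * ('C(n, m.+1))%:R :> R.
    rewrite /K1 -!natrX -!natrM (ler_nat R); exact: exp_bin.
  apply: le_trans (ler_wpM2r (Wvec_ge0 m.+1 V w 0) hp) _.
  rewrite /= [X in X <= _](_ : _ = K1 * `|wsum m.+1 w V|); last first.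
    by rewrite /n; field.
  apply: ler_wpM2l; first exact: ltW.
  exact: ler_norm_sum.
rewrite /q natrM -mulrA.
apply: (arith_up _ _ _ ((n.-2)%:R ^+ m)).
- by rewrite ltr0n; lia.
- by rewrite ltr0n; lia.
- by apply: sumr_ge0 => x _; apply: sumr_ge0 => y _; apply: sumr_ge0 => i _; exact: Wvec_ge0.
- exact: ltW.
- by rewrite /K2 -!natrX -!natrM ler_nat exp_n12.
rewrite /T0 mulr_sumr.
apply: (@le_trans _ _ (C * \sum_(x in V) \sum_(y in V) (wnorm1 m (lk w x) (V :\ x) + wnorm1 m (lk w y) (V :\ y)))).
  rewrite mulr_sumr; apply: ler_sum => x xV.
  rewrite mulr_sumr mulr_sumr.
  apply: le_trans (_ : _ <= \sum_(y in V | y != x) C * (wnorm1 m (lk w x) (V :\ x) + wnorm1 m (lk w y) (V :\ y))) _.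
    apply: ler_sum => y /andP[yV yx].
    have c2 := card2 _ _ _ xV yV yx.
    have -> : n.-2 = #|V :\ x :\ y| by rewrite /n c2.
    apply: le_trans (IH _ _ _) _; first by move: hn; rewrite /n c2 => hn'; lia.
    apply: ler_wpM2l; first exact: ltW.
    apply: le_trans (wnorm1_wxy _ _ _ _ _) _.
    apply: lerD; apply: wnorm1_sub; first exact: subD1set.
    by rewrite setDC subD1set.
  apply: sum_sub_le => [y /andP[]//|y _].
  by apply: mulr_ge0; [exact: ltW | apply: addr_ge0; exact: wnorm1_ge0].
rewrite sum_pairs -norm_link /C2 le_eqVlt; apply/orP; left; apply/eqP.
rewrite -mulrnA -[_ *+ (_ * _)]mulr_natl !natrM /n; ring.
Qed.

End Aux.

Theorem lemma3p2 (R : realFieldType) (k : nat) :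
  exists c c' : R, 0 < c /\ 0 < c' /\
    forall (n : nat), (2 * k <= n)%N ->
    forall w : {set 'I_n} -> R,
      c * ((n%:R ^+ k)^-1) * wnorm1 k w [set: 'I_n]
        <= \sum_(0 <= i < k.+1) Wvec k [set: 'I_n] w i
      /\ \sum_(0 <= i < k.+1) Wvec k [set: 'I_n] w i
        <= c' * ((n%:R ^+ k)^-1) * wnorm1 k w [set: 'I_n].
Proof.
exists (lowc R k), (upc R k).
have [hl _] := lower R 'I_0 k; have [hu _] := upper R 'I_0 k.
split=> //; split=> // n hn w.
have [_ L] := lower R 'I_n k; have [_ U] := upper R 'I_n k.
have hV : #|[set: 'I_n]| = n by rewrite cardsT card_ord.
have hn' : (2 * k <= #|[set: 'I_n]|)%N by rewrite hV.
have := L _ w hn'; have := U _ w hn'; rewrite hV => hU hL.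
have [n0|n0] := eqVneq n 0%N.
  have k0 : k = 0%N by lia.
  move: hU hL; rewrite k0 !expr0 invr1 !mulr1 !mul1r => hU hL; by split.
have hp : 0 < n%:R ^+ k :> R by rewrite exprn_gt0 // ltr0n lt0n.
split.
  by rewrite -mulrA mulrCA ler_pdivrMl // mulrC.
by rewrite -mulrA mulrCA ler_pdivlMl // mulrC.
Qed.
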